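(* Let $0<r<\infty$, $N\in\mathbb N$, and for each of the seven types $R_N=A_N,B_N,B_N^\vee,C_N,C_N^\vee,BC_N,D_N$ consider the determinantal point process whose correlation kernel at time $t\in(0,t_\ast)$ is $K_t^{R_N}(x,y;t_\ast,r)=\sum_{n=1}^N \frac{1}{m^{R_N}_n(t_\ast)}M^{R_N}_n(x,t)\overline{M^{R_N}_n(y,t_\ast-t)}$ (on $[0,2\pi r)$ for $A_N$, on $[0,\pi r]$ otherwise). Put $t=t_\ast/2$. In the limit $t_\ast\to\infty$, these seven determinantal point processes degenerate into four types of determinantal point processes, with correlation kernels $K^{A_N}(x,y;r)=\frac{1}{2\pi r}\frac{\sin\{N(x-y)/2r\}}{\sin\{(x-y)/2r\}}$, $x,y\in[0,2\pi r)$ (limit for $A_N$); $K^{B_N}(x,y;r)=\frac{1}{2\pi r}\Big[\frac{\sin\{N(x-y)/r\}}{\sin\{(x-y)/2r\}}-\frac{\sin\{N(x+y)/r\}}{\sin\{(x+y)/2r\}}\Big]$, $x,y\in[0,\pi r]$ (common limit for $B_N$, $BC_N$, $C_N^\vee$); $K^{C_N}(x,y;r)=\frac{1}{2\pi r}\Big[\frac{\sin\{(2N+1)(x-y)/2r\}}{\sin\{(x-y)/2r\}}-\frac{\sin\{(2N+1)(x+y)/2r\}}{\sin\{(x+y)/2r\}}\Big]$, $x,y\in[0,\pi r]$ (common limit for $C_N$, $B_N^\vee$); $K^{D_N}(x,y;r)=\frac{1}{2\pi r}\Big[\frac{\sin\{(2N-1)(x-y)/2r\}}{\sin\{(x-y)/2r\}}+\frac{\sin\{(2N-1)(x+y)/2r\}}{\sin\{(x+y)/2r\}}\Big]$,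 $x,y\in[0,\pi r]$ (limit for $D_N$).
   Context: Jacobi theta functions: $\vartheta_1(v;\tau)=2\sum_{n\ge1}(-1)^{n-1}e^{\tau\pi i(n-1/2)^2}\sin\{(2n-1)\pi v\}$, $\vartheta_2(v;\tau)=2\sum_{n\ge1}e^{\tau\pi i(n-1/2)^2}\cos\{(2n-1)\pi v\}$, $\Im\tau>0$. Set $\xi(x)=x/(2\pi r)$, $\tau(t)=it/(2\pi r^2)$. Let $J^{R_N}(j)=j-1/2$ for $A_N,C_N^\vee$; $j-1$ for $B_N,B_N^\vee,D_N$; $j$ for $C_N,BC_N$. Let $\mathcal N^{R_N}=N$ ($A_N$), $2N-1$ ($B_N$), $2N$ ($B_N^\vee,C_N^\vee$), $2(N+1)$ ($C_N$), $2N+1$ ($BC_N$), $2(N-1)$ ($D_N$). Writing $J=J^{R_N}(j)$, $\mathcal N=\mathcal N^{R_N}$: $M^{A_N}_j(x,t)=e^{2\pi iJ\xi(x)}\vartheta_2(\mathcal N\{J\tau(t)+\xi(x)\};\mathcal N^2\tau(t))$; for $B_N,B_N^\vee$: $M_j=e^{2\pi iJ\xi(x)}\vartheta_1(\mathcal N\{J\tau(t)+\xi(x)\};\mathcal N^2\tau(t))-e^{-2\pi iJ\xi(x)}\vartheta_1(\mathcal N\{J\tau(t)-\xi(x)\};\mathcal N^2\tau(t))$; for $C_N,C_N^\vee,BC_N$: same with $\vartheta_2$ in place of $\vartheta_1$; for $D_N$: same with $\vartheta_2$ and a plus sign between the two terms. The constants are $m_j^{R_N}(t_\ast)=2\pi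 r\,\vartheta_2(\mathcal N J\tau(t_\ast);\mathcal N^2\tau(t_\ast))$ for $A_N,C_N,C_N^\vee,BC_N$; for $B_N,B_N^\vee$ the same except $m_1=4\pi r\,\vartheta_2(0;\mathcal N^2\tau(t_\ast))$; for $D_N$ the same except $m_1=4\pi r\,\vartheta_2(0;\mathcal N^2\tau(t_\ast))$ and $m_N=4\pi r\,\vartheta_2(\mathcal N(N-1)\tau(t_\ast);\mathcal N^2\tau(t_\ast))$. The point process has density on the Weyl alcove proportional to $\det_{j,k}[\overline{M_j^{R_N}(x_k,t_\ast-t)}]\det_{j,k}[M_j^{R_N}(x_k,t)]$, and is determinantal with the kernel $K_t^{R_N}$ stated in the claim. *)

(* Defs.v *)
From Stdlib Require Import Reals List.
From Coquelicot Require Import Coquelicot.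
Import ListNotations.
Open Scope R_scope.

Definition Cexp (z : C) : C :=
  (exp (Re z) * cos (Im z), exp (Re z) * sin (Im z)).
Definition Ccos (z : C) : C :=
  Cdiv (Cplus (Cexp (Cmult Ci z)) (Cexp (Copp (Cmult Ci z)))) (RtoC 2).
Definition Csin (z : C) : C :=
  Cdiv (Cminus (Cexp (Cmult Ci z)) (Cexp (Copp (Cmult Ci z)))) (Cmult (RtoC 2) Ci).

Definition CSeries (a : nat -> C) : C :=
  (Series (fun k => Re (a k)), Series (fun k => Im (a k))).

Definition Csum1 (N : nat) (f : nat -> C) : C :=
  fold_right Cplus (RtoC 0) (map f (seq 1 N)).

(* ---------- Jacobi theta functions (series index n = k+1 >= 1) ---------- *)
Definition theta1 (v tau : C) : C :=
  Cmult (RtoC 2) (CSeries (fun k =>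
    Cmult (RtoC ((-1) ^ k))
     (Cmult (Cexp (Cmult (Cmult tau (Cmult (RtoC PI) Ci)) (RtoC ((INR k + /2) ^ 2))))
            (Csin (Cmult (RtoC ((2 * INR k + 1) * PI)) v))))).
Definition theta2 (v tau : C) : C :=
  Cmult (RtoC 2) (CSeries (fun k =>
     Cmult (Cexp (Cmult (Cmult tau (Cmult (RtoC PI) Ci)) (RtoC ((INR k + /2) ^ 2))))
           (Ccos (Cmult (RtoC ((2 * INR k + 1) * PI)) v)))).

Inductive RootSys : Set := A_N | B_N | Bv_N | C_N | Cv_N | BC_N | D_N.

Definition xi (r x : R) : R := x / (2 * PI * r).
Definition tau (r t : R) : C := (0, t / (2 * PI * r ^ 2)).

Definition Jidx (RN : RootSys) (j : nat) : R :=
  match RN with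
  | A_N | Cv_N => INR j - /2
  | B_N | Bv_N | D_N => INR j - 1
  | C_N | BC_N => INR j
  end.

Definition calN (RN : RootSys) (N : nat) : R :=
  match RN with
  | A_N => INR N
  | B_N => 2 * INR N - 1
  | Bv_N | Cv_N => 2 * INR N
  | C_N => 2 * (INR N + 1)
  | BC_N => 2 * INR N + 1
  | D_N => 2 * (INR N - 1)
  end.

Definition e2pii (a : R) : C := Cexp (0, 2 * PI * a).

Definition Mfun (RN : RootSys) (N : nat) (r : R) (j : nat) (x t : R) : C :=
  let J := Jidx RN j in
  let cN := calN RN N in
  let ta := tau r t in
  let s := xi r x in
  let tau' := Cmult (RtoC (cN ^ 2)) ta in
  let argp := Cmult (RtoC cN) (Cplus (Cmult (RtoC J) ta) (RtoC s)) in
  let argm := Cmult (RtoC cN) (Cminus (Cmult (RtoC J) ta) (RtoC s)) in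
  match RN with
  | A_N => Cmult (e2pii (J * s)) (theta2 argp tau')
  | B_N | Bv_N =>
      Cminus (Cmult (e2pii (J * s)) (theta1 argp tau'))
             (Cmult (e2pii (- (J * s))) (theta1 argm tau'))
  | C_N | Cv_N | BC_N =>
      Cminus (Cmult (e2pii (J * s)) (theta2 argp tau'))
             (Cmult (e2pii (- (J * s))) (theta2 argm tau'))
  | D_N =>
      Cplus (Cmult (e2pii (J * s)) (theta2 argp tau'))
            (Cmult (e2pii (- (J * s))) (theta2 argm tau'))
  end.

Definition mconst (RN : RootSys) (N : nat) (r : R) (j : nat) (ts : R) : C :=
  let J := Jidx RN j in
  let cN := calN RN N in
  let ta := tau r ts in
  let tau' := Cmult (RtoC (cN ^ 2)) ta in
  let generic := Cmult (RtoC (2 * PI * r)) (theta2 (Cmult (RtoC (cN * J)) ta) tau') in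
  let special1 := Cmult (RtoC (4 * PI * r)) (theta2 (RtoC 0) tau') in
  match RN with
  | A_N | C_N | Cv_N | BC_N => generic
  | B_N | Bv_N => if Nat.eqb j 1 then special1 else generic
  | D_N =>
      if Nat.eqb j 1 then special1
      else if Nat.eqb j N then
        Cmult (RtoC (4 * PI * r))
              (theta2 (Cmult (RtoC (cN * (INR N - 1))) ta) tau')
      else generic
  end.

Definition Kt (RN : RootSys) (N : nat) (r ts t x y : R) : C :=
  Csum1 N (fun n =>
    Cmult (Cinv (mconst RN N r n ts))
          (Cmult (Mfun RN N r n x t) (Cconj (Mfun RN N r n y (ts - t))))).

(* sin(m th)/sin(th), extended by continuity at the zeros of sin th
   (where the value is m cos(m th)/cos(th)). *)
Definition sinratio (m th : R) : R :=
  if Req_EM_T (sin th) 0 then m * cos (m * th) / cos th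
  else sin (m * th) / sin th.

Definition KA (N : nat) (r x y : R) : R :=
  / (2 * PI * r) * sinratio (INR N) ((x - y) / (2 * r)).
Definition KB (N : nat) (r x y : R) : R :=
  / (2 * PI * r) * (sinratio (2 * INR N) ((x - y) / (2 * r))
                   - sinratio (2 * INR N) ((x + y) / (2 * r))).
Definition KC (N : nat) (r x y : R) : R :=
  / (2 * PI * r) * (sinratio (2 * INR N + 1) ((x - y) / (2 * r))
                   - sinratio (2 * INR N + 1) ((x + y) / (2 * r))).
Definition KD (N : nat) (r x y : R) : R :=
  / (2 * PI * r) * (sinratio (2 * INR N - 1) ((x - y) / (2 * r))
                   + sinratio (2 * INR N - 1) ((x + y) / (2 * r))).

Definition Klimit (RN : RootSys) (N : nat) (r x y : R) : R :=
  match RN with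
  | A_N => KA N r x y
  | B_N | BC_N | Cv_N => KB N r x y
  | C_N | Bv_N => KC N r x y
  | D_N => KD N r x y
  end.

Definition in_dom (RN : RootSys) (r x : R) : Prop :=
  match RN with
  | A_N => 0 <= x < 2 * PI * r
  | _ => 0 <= x <= PI * r
  end.

(* Main.v *)
Require Import Defs.
From Stdlib Require Import Reals.
From Coquelicot Require Import Coquelicot.
From Stdlib Require Import Lra Lia List.
Import ListNotations.
Open Scope R_scope.

Definition climit (f : R -> C) (z : C) :=
  filterlim f (Rbar_locally p_infty) (locally z).
Definition rlimit (f : R -> R) (z : R) :=
  filterlim f (Rbar_locally p_infty) (locally z).

Lemma climit_plus f g a b : climit f a -> climit g b ->
  climit (fun t => Cplus (f t) (g t)) (Cplus a b).
Proof.
  intros Hf Hg. unfold climit.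
  apply (filterlim_comp_2 f g Cplus Hf Hg (@filterlim_plus C_AbsRing C_NormedModule a b)).
Qed.

Lemma climit_const a : climit (fun _ => a) a.
Proof. apply filterlim_const. Qed.

Lemma climit_ext f g a : (forall t, f t = g t) -> climit f a -> climit g a.
Proof. intros H. apply filterlim_ext. exact H. Qed.

Lemma climit_pair f g a b : rlimit f a -> rlimit g b ->
  climit (fun t => (f t, g t)) (a, b).
Proof.
  intros Hf Hg. unfold climit, rlimit in *.
  apply filterlim_locally. intros eps.
  apply filterlim_locally with (eps := eps) in Hf.
  apply filterlim_locally with (eps := eps) in Hg.
  generalize (filter_and _ _ Hf Hg).
  apply filter_imp. intros t [H1 H2]. split; assumption.
Qed.

Lemma climit_fst f z : climit f z -> rlimit (fun t => fst (f t)) (fst z).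
Proof.
  intros Hf. unfold climit, rlimit in *.
  apply filterlim_locally. intros eps.
  apply filterlim_locally with (eps := eps) in Hf.
  revert Hf. apply filter_imp. intros t [H1 H2]. exact H1.
Qed.

Lemma climit_snd f z : climit f z -> rlimit (fun t => snd (f t)) (snd z).
Proof.
  intros Hf. unfold climit, rlimit in *.
  apply filterlim_locally. intros eps.
  apply filterlim_locally with (eps := eps) in Hf.
  revert Hf. apply filter_imp. intros t [H1 H2]. exact H2.
Qed.

Lemma rlimit_plus f g a b : rlimit f a -> rlimit g b -> rlimit (fun t => f t + g t) (a + b).
Proof. intros. apply (is_lim_plus' f g p_infty a b); assumption. Qed.
Lemma rlimit_mult f g a b : rlimit f a -> rlimit g b -> rlimit (fun t => f t * g t) (a * b).
Proof. intros Hf Hg. generalize (is_lim_mult f g p_infty a b Hf Hg I). simpl. auto. Qed.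
Lemma rlimit_opp f a : rlimit f a -> rlimit (fun t => - f t) (- a).
Proof. intros Hf. generalize (is_lim_opp f p_infty a Hf). simpl. auto. Qed.
Lemma rlimit_inv f a : rlimit f a -> a <> 0 -> rlimit (fun t => / f t) (/ a).
Proof. intros Hf Ha. generalize (is_lim_inv f p_infty a Hf). simpl. intros H; apply H. intro E; apply Ha; injection E; auto. Qed.
Lemma rlimit_const a : rlimit (fun _ => a) a.
Proof. apply filterlim_const. Qed.

Lemma climit_ext_loc f g a : (exists M, forall t, M < t -> f t = g t) -> climit f a -> climit g a.
Proof. intros H. apply filterlim_ext_loc. exact H. Qed.
Lemma rlimit_ext_loc f g a : (exists M, forall t, M < t -> f t = g t) -> rlimit f a -> rlimit g a.
Proof. intros H. apply filterlim_ext_loc. exact H. Qed.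

Lemma climit_mult f g a b : climit f a -> climit g b ->
  climit (fun t => Cmult (f t) (g t)) (Cmult a b).
Proof.
  intros Hf Hg.
  assert (F1 := climit_fst _ _ Hf). assert (F2 := climit_snd _ _ Hf).
  assert (G1 := climit_fst _ _ Hg). assert (G2 := climit_snd _ _ Hg).
  unfold Cmult. apply climit_pair.
  - apply rlimit_plus. apply rlimit_mult; auto. apply rlimit_opp, rlimit_mult; auto.
  - apply rlimit_plus; apply rlimit_mult; auto.
Qed.

Lemma rlimit_sq f a : rlimit f a -> rlimit (fun t => f t ^ 2) (a ^ 2).
Proof.
  intros H. apply rlimit_ext_loc with (f := fun t => f t * f t).
  exists 0; intros; simpl; ring.
  replace (a ^ 2) with (a * a) by (simpl; ring). apply rlimit_mult; auto.
Qed.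

Lemma climit_inv f z : climit f z -> z <> RtoC 0 -> climit (fun t => Cinv (f t)) (Cinv z).
Proof.
  intros Hf Hz.
  assert (H1 := climit_fst _ _ Hf). assert (H2 := climit_snd _ _ Hf).
  destruct z as [a b]; simpl in *.
  assert (Hn : a ^ 2 + b ^ 2 <> 0).
  { intro E. apply Hz. assert (a = 0) by nra. assert (b = 0) by nra. subst. reflexivity. }
  unfold Cinv. apply climit_pair; unfold Rdiv.
  - apply rlimit_mult; [exact H1|]. apply rlimit_inv; [|exact Hn].
    apply rlimit_plus; apply rlimit_sq; assumption.
  - apply rlimit_mult; [apply rlimit_opp; exact H2|]. apply rlimit_inv; [|exact Hn].
    apply rlimit_plus; apply rlimit_sq; assumption.
Qed.

Lemma climit_conj f z : climit f z -> climit (fun t => Cconj (f t)) (Cconj z).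
Proof.
  intros Hf. unfold Cconj. apply climit_pair.
  apply climit_fst; auto. apply rlimit_opp. apply climit_snd; auto.
Qed.

Lemma climit_half f z : climit f z -> climit (fun s => f (s / 2)) z.
Proof.
  intros Hf. unfold climit in *.
  apply (filterlim_comp _ _ _ (fun s => s / 2) f) with (G := Rbar_locally p_infty); [|exact Hf].
  intros P [M HM]. exists (2 * M). intros x Hx. apply HM. lra.
Qed.


Lemma exp_le' x y : x <= y -> exp x <= exp y.
Proof. intros [H|H]. left; apply exp_increasing; auto. subst; lra. Qed.

Lemma exp_INR_mul n x : exp (INR n * x) = exp x ^ n.
Proof.
  induction n. simpl. rewrite Rmult_0_l, exp_0. reflexivity.
  rewrite S_INR, Rmult_plus_distr_r, Rmult_1_l, exp_plus, IHn. simpl. ring.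
Qed.

Lemma q_bounds u d : 0 < u -> 0 < d -> 0 < exp (-(u*d)) < 1 /\ exp (-(u*d)) <= / (1 + u * d).
Proof.
  intros Hu Hd. split. split. apply exp_pos.
  rewrite <- exp_0. apply exp_increasing. nra.
  rewrite exp_Ropp. apply Rinv_le_contravar. nra. apply exp_ineq1_le.
Qed.

Lemma ex_geom q : 0 <= q < 1 -> ex_series (fun k => q ^ k).
Proof. intros H. exists (/ (1 - q)). apply is_series_geom. rewrite Rabs_pos_eq; lra. Qed.

Lemma ser_ex (A y : nat -> R) d u : 0 < d -> 0 < u ->
  (forall k, d * INR k <= A k) -> (forall k, Rabs (y k) <= 1) ->
  ex_series (fun k => exp (-(u * A k)) * y k).
Proof.
  intros Hd Hu HA Hy.
  destruct (q_bounds u d Hu Hd) as [[Hq0 Hq1] _].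
  apply (@ex_series_le R_AbsRing R_CompleteNormedModule _ (fun k => exp (-(u*d)) ^ k)).
  2: apply ex_geom; lra.
  intros k. change (Rabs (exp (- (u * A k)) * y k) <= exp (- (u * d)) ^ k).
  rewrite Rabs_mult, Rabs_pos_eq by (left; apply exp_pos).
  rewrite <- exp_INR_mul.
  apply Rle_trans with (exp (- (u * A k)) * 1).
  apply Rmult_le_compat_l. left; apply exp_pos. auto.
  rewrite Rmult_1_r. apply exp_le'. specialize (HA k). nra.
Qed.



Lemma G0 (A y : nat -> R) d : 0 < d ->
  (forall k, d * (INR k + 1) <= A k) -> (forall k, Rabs (y k) <= 1) ->
  rlimit (fun u => Series (fun k => exp (-(u * A k)) * y k)) 0.
Proof.
  intros Hd HA Hy. unfold rlimit.
  apply filterlim_locally. intros eps.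
  exists (2 / (eps * d)). intros u Hu.
  assert (He := cond_pos eps).
  assert (Hu0 : 0 < u). { apply Rlt_trans with (2 / (eps * d)); auto.
    apply Rdiv_lt_0_compat; nra. }
  change (Rabs (Series (fun k => exp (- (u * A k)) * y k) - 0) < eps).
  rewrite Rminus_0_r.
  destruct (q_bounds u d Hu0 Hd) as [[Hq0 Hq1] Hq2].
  set (q := exp (- (u * d))) in *.
  assert (Hb : forall k, Rabs (exp (- (u * A k)) * y k) <= q * q ^ k).
  { intros k. rewrite Rabs_mult, Rabs_pos_eq by (left; apply exp_pos).
    apply Rle_trans with (exp (- (u * A k)) * 1).
    apply Rmult_le_compat_l. left; apply exp_pos. auto.
    rewrite Rmult_1_r. unfold q. rewrite <- exp_INR_mul, <- exp_plus.
    apply exp_le'. specialize (HA k). nra. }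
  assert (Hexb : ex_series (fun k => q * q ^ k)).
  { apply (@ex_series_scal_l R_AbsRing R_CompleteNormedModule). apply ex_geom; lra. }
  assert (Hexa : ex_series (fun k => Rabs (exp (- (u * A k)) * y k))).
  { apply (@ex_series_le R_AbsRing R_CompleteNormedModule _ (fun k => q * q ^ k)); auto.
    intros k. change (Rabs (Rabs (exp (- (u * A k)) * y k)) <= q * q ^ k).
    rewrite Rabs_Rabsolu. auto. }
  eapply Rle_lt_trans. apply Series_Rabs. exact Hexa.
  eapply Rle_lt_trans. apply Series_le. 2: exact Hexb.
  intros k; split. apply Rabs_pos. apply Hb.
  rewrite Series_scal_l, Series_geom by (rewrite Rabs_pos_eq; lra).
  assert (H1 : q * / (1 - q) <= / (u * d)).
  { apply Rle_trans with ((/ (1 + u * d)) * / (1 - / (1 + u*d))).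
    apply Rmult_le_compat. lra. left; apply Rinv_0_lt_compat; lra. auto.
    apply Rinv_le_contravar. assert (0 < / (1 + u * d) < 1).
    { split. apply Rinv_0_lt_compat; nra. rewrite <- Rinv_1. apply Rinv_lt_contravar; nra. }
    lra. lra.
    right. field. split; nra. }
  assert (H2 : / (u * d) < eps).
  { assert (2 / (eps * d) * d < u * d) by (apply Rmult_lt_compat_r; auto).
    replace (2 / (eps * d) * d) with (2 / eps) in H by (field; lra).
    apply Rlt_trans with (/ (2 / eps)).
    apply Rinv_lt_contravar; auto. apply Rmult_lt_0_compat. apply Rdiv_lt_0_compat; lra. nra.
    replace (/ (2 / eps)) with (eps / 2) by (field; lra). lra. }
  lra.
Qed.

Lemma G1 (A y : nat -> R) d : 0 < d -> A 0%nat = 0 ->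
  (forall k, d * (INR k + 1) <= A (S k)) -> (forall k, Rabs (y k) <= 1) ->
  rlimit (fun u => Series (fun k => exp (-(u * A k)) * y k)) (y 0%nat).
Proof.
  intros Hd HA0 HA Hy.
  apply rlimit_ext_loc with (f := fun u => y 0%nat + Series (fun k => exp (-(u * A (S k))) * y (S k))).
  exists 0. intros u Hu. rewrite (Series_incr_1 (fun k => exp (-(u * A k)) * y k)). rewrite HA0, Rmult_0_r, Ropp_0, exp_0. ring.
  apply (ser_ex A y d u Hd Hu); auto.
  intros [|k]. rewrite HA0. simpl. lra. rewrite S_INR. auto.
  assert (H := rlimit_plus _ _ _ _ (rlimit_const (y 0%nat))
    (G0 (fun k => A (S k)) (fun k => y (S k)) d Hd HA (fun k => Hy (S k)))).
  rewrite Rplus_0_r in H. exact H.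
Qed.

Lemma Cexp_ext z z' : fst z = fst z' -> snd z = snd z' -> Cexp z = Cexp z'.
Proof. destruct z, z'; simpl; intros; subst; reflexivity. Qed.

Lemma Cexp_pair a b : Cexp (a, b) = (exp a * cos b, exp a * sin b).
Proof. reflexivity. Qed.

Lemma Ccos_explicit p q :
  Ccos (p, q) = ((exp (-q) + exp q) / 2 * cos p, (exp (-q) - exp q) / 2 * sin p).
Proof.
  unfold Ccos, Ci.
  rewrite (Cexp_ext _ (-q, p)) by (simpl; ring).
  rewrite (Cexp_ext (Copp (Cmult (0,1) (p,q))) (q, -p)) by (simpl; ring).
  rewrite !Cexp_pair, cos_neg, sin_neg.
  apply injective_projections; simpl; field.
Qed.

Lemma Csin_explicit p q :
  Csin (p, q) = ((exp (-q) + exp q) / 2 * sin p, - ((exp (-q) - exp q) / 2) * cos p).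
Proof.
  unfold Csin, Ci.
  rewrite (Cexp_ext _ (-q, p)) by (simpl; ring).
  rewrite (Cexp_ext (Copp (Cmult (0,1) (p,q))) (q, -p)) by (simpl; ring).
  rewrite !Cexp_pair, cos_neg, sin_neg.
  apply injective_projections; simpl; field.
Qed.

Lemma CSeries_ext (f : nat -> C) g h : (forall k, f k = (g k, h k)) ->
  CSeries f = (Series g, Series h).
Proof.
  intros H. unfold CSeries. apply injective_projections; simpl;
  apply Series_ext; intros k; rewrite H; reflexivity.
Qed.

Lemma Cmult_RtoC_l c a b : Cmult (RtoC c) (a, b) = (c * a, c * b).
Proof. apply injective_projections; simpl; ring. Qed.

Definition th2re (T v1 v2 : R) (k : nat) : R :=
  exp (-(T * PI * (INR k + /2) ^ 2)) *
  ((exp (-((2 * INR k + 1) * PI * v2)) + exp ((2 * INR k + 1) * PI * v2)) / 2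
   * cos ((2 * INR k + 1) * PI * v1)).
Definition th2im (T v1 v2 : R) (k : nat) : R :=
  exp (-(T * PI * (INR k + /2) ^ 2)) *
  ((exp (-((2 * INR k + 1) * PI * v2)) - exp ((2 * INR k + 1) * PI * v2)) / 2
   * sin ((2 * INR k + 1) * PI * v1)).
Definition th1re (T v1 v2 : R) (k : nat) : R :=
  (-1) ^ k * (exp (-(T * PI * (INR k + /2) ^ 2)) *
  ((exp (-((2 * INR k + 1) * PI * v2)) + exp ((2 * INR k + 1) * PI * v2)) / 2
   * sin ((2 * INR k + 1) * PI * v1))).
Definition th1im (T v1 v2 : R) (k : nat) : R :=
  (-1) ^ k * (exp (-(T * PI * (INR k + /2) ^ 2)) *
  (- ((exp (-((2 * INR k + 1) * PI * v2)) - exp ((2 * INR k + 1) * PI * v2)) / 2)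
   * cos ((2 * INR k + 1) * PI * v1))).

Lemma Cexp_theta_arg T c :
  Cexp (Cmult (Cmult (0, T) (Cmult (RtoC PI) Ci)) (RtoC c)) = (exp (-(T * PI * c)), 0).
Proof.
  rewrite (Cexp_ext _ (-(T * PI * c), 0)) by (unfold Ci; simpl; ring).
  rewrite Cexp_pair, cos_0, sin_0. apply injective_projections; simpl; ring.
Qed.

Lemma theta2_explicit v1 v2 T :
  theta2 (v1, v2) (0, T) = (2 * Series (th2re T v1 v2), 2 * Series (th2im T v1 v2)).
Proof.
  unfold theta2. rewrite (CSeries_ext _ (th2re T v1 v2) (th2im T v1 v2)).
  apply Cmult_RtoC_l.
  intros k. rewrite Cexp_theta_arg, Cmult_RtoC_l, Ccos_explicit.
  unfold th2re, th2im. apply injective_projections; simpl; ring.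
Qed.

Lemma theta1_explicit v1 v2 T :
  theta1 (v1, v2) (0, T) = (2 * Series (th1re T v1 v2), 2 * Series (th1im T v1 v2)).
Proof.
  unfold theta1. rewrite (CSeries_ext _ (th1re T v1 v2) (th1im T v1 v2)).
  apply Cmult_RtoC_l.
  intros k. rewrite Cexp_theta_arg, Cmult_RtoC_l, Csin_explicit.
  unfold th1re, th1im. apply injective_projections; simpl; ring.
Qed.

Definition Ak cN J (k : nat) := cN ^ 2 * INR k * (INR k + 1) + 2 * (INR k + 1) * cN * J.
Definition Bk cN J (k : nat) := cN ^ 2 * INR k * (INR k + 1) - 2 * INR k * cN * J.

Lemma INR_kk k : 0 <= INR k * (INR k - 1).
Proof. destruct k. simpl; lra. rewrite S_INR. pose proof (pos_INR k). nra. Qed.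

Lemma rlimit_comp_div f l c : 0 < c -> rlimit f l -> rlimit (fun t => f (t / c)) l.
Proof.
  intros Hc Hf. unfold rlimit in *.
  apply (filterlim_comp _ _ _ (fun t => t / c) f) with (G := Rbar_locally p_infty); [|exact Hf].
  intros P [M HM]. exists (M * c). intros x Hx. apply HM.
  apply Rmult_lt_reg_r with c; auto. unfold Rdiv. rewrite Rmult_assoc, Rinv_l; lra.
Qed.

Lemma Ak_ge cN J k : 0 < cN -> 0 <= J -> J < cN -> 2 * cN * (cN - J) * INR k <= Ak cN J k.
Proof.
  intros. unfold Ak. pose proof (INR_kk k). pose proof (pos_INR k).
  assert (0 <= cN^2 * (INR k * (INR k - 1))) by (apply Rmult_le_pos; nra).
  assert (0 <= 2 * cN * J * (2 * INR k + 1)) by (apply Rmult_le_pos; nra). nra.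
Qed.

Lemma Bk_ge cN J k : 0 < cN -> 0 <= J -> J < cN -> 2 * cN * (cN - J) * INR k <= Bk cN J k.
Proof.
  intros. unfold Bk. pose proof (INR_kk k). pose proof (pos_INR k).
  assert (0 <= cN^2 * (INR k * (INR k - 1))) by (apply Rmult_le_pos; nra). nra.
Qed.

Lemma Bk_S cN J k : 0 < cN -> 0 <= J -> J < cN -> 2 * cN * (cN - J) * (INR k + 1) <= Bk cN J (S k).
Proof. intros. rewrite <- S_INR. apply Bk_ge; auto. Qed.
Lemma Ak_S cN J k : 0 < cN -> 0 <= J -> J < cN -> 2 * cN * (cN - J) * (INR k + 1) <= Ak cN J (S k).
Proof. intros. rewrite <- S_INR. apply Ak_ge; auto. Qed.

Lemma Ak_pos cN J k : 0 < cN -> 0 < J -> 2 * cN * J * (INR k + 1) <= Ak cN J k.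
Proof.
  intros. unfold Ak. pose proof (pos_INR k).
  assert (0 <= cN^2 * (INR k * (INR k + 1))) by (apply Rmult_le_pos; nra). nra.
Qed.

Lemma Bk_0 cN J : Bk cN J 0 = 0.
Proof. unfold Bk; simpl; ring. Qed.

Lemma series_split (A B y : nat -> R) s1 s2 d u : 0 < d -> 0 < u ->
  (forall k, d * INR k <= A k) -> (forall k, d * INR k <= B k) -> (forall k, Rabs (y k) <= 1) ->
  Series (fun k => s1 * (exp (-(u * A k)) * y k) + s2 * (exp (-(u * B k)) * y k)) =
  s1 * Series (fun k => exp (-(u * A k)) * y k) + s2 * Series (fun k => exp (-(u * B k)) * y k).
Proof.
  intros. rewrite Series_plus. rewrite !Series_scal_l. reflexivity.
  apply (ex_series_scal_l (K:=R_AbsRing) (V:=R_NormedModule) s1 (fun k => exp (-(u * A k)) * y k)). apply (ser_ex A y d u); auto.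
  apply (ex_series_scal_l (K:=R_AbsRing) (V:=R_NormedModule) s2 (fun k => exp (-(u * B k)) * y k)). apply (ser_ex B y d u); auto.
Qed.

Lemma lim_AB_pos r cN J (y : nat -> R) s1 s2 : 0 < r -> 0 < cN -> 0 < J -> J < cN ->
  (forall k, Rabs (y k) <= 1) ->
  rlimit (fun t => Series (fun k => s1 * (exp (-(t / (2 * r ^ 2) * Ak cN J k)) * y k)
                               + s2 * (exp (-(t / (2 * r ^ 2) * Bk cN J k)) * y k)))
         (s2 * y 0%nat).
Proof.
  intros Hr HcN HJ HJc Hy.
  apply (rlimit_comp_div (fun u => Series (fun k => s1 * (exp (-(u * Ak cN J k)) * y k)
                               + s2 * (exp (-(u * Bk cN J k)) * y k)))).
  apply Rmult_lt_0_compat; [lra| apply pow_lt; auto].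
  assert (Hd : 0 < 2 * cN * (cN - J)) by nra.
  apply rlimit_ext_loc with (f := fun u => s1 * Series (fun k => exp (-(u * Ak cN J k)) * y k)
     + s2 * Series (fun k => exp (-(u * Bk cN J k)) * y k)).
  exists 0. intros u Hu. symmetry. apply series_split with (d := 2 * cN * (cN - J)); auto.
  intros; apply Ak_ge; lra. intros; apply Bk_ge; lra.
  replace (s2 * y 0%nat) with (s1 * 0 + s2 * y 0%nat) by ring.
  apply rlimit_plus; apply rlimit_mult; try apply rlimit_const.
  apply G0 with (d := 2 * cN * J). nra. intros; apply Ak_pos; auto. auto.
  apply G1 with (d := 2 * cN * (cN - J)); auto. apply Bk_0. intros; apply Bk_S; lra.
Qed.

Lemma lim_AB_zero r cN J (y : nat -> R) s1 s2 : 0 < r -> 0 < cN -> J = 0 ->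
  (forall k, Rabs (y k) <= 1) ->
  rlimit (fun t => Series (fun k => s1 * (exp (-(t / (2 * r ^ 2) * Ak cN J k)) * y k)
                               + s2 * (exp (-(t / (2 * r ^ 2) * Bk cN J k)) * y k)))
         ((s1 + s2) * y 0%nat).
Proof.
  intros Hr HcN HJ Hy. subst J.
  apply (rlimit_comp_div (fun u => Series (fun k => s1 * (exp (-(u * Ak cN 0 k)) * y k)
                               + s2 * (exp (-(u * Bk cN 0 k)) * y k)))).
  apply Rmult_lt_0_compat; [lra| apply pow_lt; auto].
  assert (Hd : 0 < 2 * cN * (cN - 0)) by nra.
  apply rlimit_ext_loc with (f := fun u => s1 * Series (fun k => exp (-(u * Ak cN 0 k)) * y k)
     + s2 * Series (fun k => exp (-(u * Bk cN 0 k)) * y k)).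
  exists 0. intros u Hu. symmetry. apply series_split with (d := 2 * cN * (cN - 0)); auto.
  intros; apply Ak_ge; lra. intros; apply Bk_ge; lra.
  replace ((s1 + s2) * y 0%nat) with (s1 * y 0%nat + s2 * y 0%nat) by ring.
  apply rlimit_plus; apply rlimit_mult; try apply rlimit_const.
  apply G1 with (d := 2 * cN * (cN - 0)); auto. unfold Ak; simpl; ring. intros; apply Ak_S; lra.
  apply G1 with (d := 2 * cN * (cN - 0)); auto. apply Bk_0. intros; apply Bk_S; lra.
Qed.

Lemma exp_comb x y z w : x + y + z = w -> exp x * exp y * exp z = exp w.
Proof. intros H. rewrite <- !exp_plus. rewrite H. reflexivity. Qed.

Lemma rlimit_eq f a b : rlimit f a -> a = b -> rlimit f b.
Proof. intros H ->. exact H. Qed.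
Lemma climit_eq f a b : climit f a -> a = b -> climit f b.
Proof. intros H ->. exact H. Qed.

Lemma abs_cos x : Rabs (cos x) <= 1.
Proof. apply Rabs_le. apply COS_bound. Qed.
Lemma abs_sin x : Rabs (sin x) <= 1.
Proof. apply Rabs_le. apply SIN_bound. Qed.
Lemma abs_sgn_mul (k : nat) x : Rabs x <= 1 -> Rabs ((-1) ^ k * x) <= 1.
Proof. intros. rewrite Rabs_mult, pow_1_abs. lra. Qed.

Lemma core_A (r cN J w t : R) (k : nat) : 0 < r ->
  (exp (t / (2 * r ^ 2) * (cN ^ 2 / 4 - cN * J))) * exp (-((cN ^ 2 * (t / (2 * PI * r ^ 2))) * PI * (INR k + /2) ^ 2)) * exp (-((2 * INR k + 1) * PI * (cN * J * (t / (2 * PI * r ^ 2)))))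
  = exp (-((t / (2 * r ^ 2)) * Ak cN J k)).
Proof.
  intros Hr. apply exp_comb. unfold Ak. pose proof PI_RGT_0. field. split; lra.
Qed.
Lemma core_B (r cN J w t : R) (k : nat) : 0 < r ->
  (exp (t / (2 * r ^ 2) * (cN ^ 2 / 4 - cN * J))) * exp (-((cN ^ 2 * (t / (2 * PI * r ^ 2))) * PI * (INR k + /2) ^ 2)) * exp ((2 * INR k + 1) * PI * (cN * J * (t / (2 * PI * r ^ 2))))
  = exp (-((t / (2 * r ^ 2)) * Bk cN J k)).
Proof.
  intros Hr. apply exp_comb. unfold Bk. pose proof PI_RGT_0. field. split; lra.
Qed.

Lemma pw2re (r cN J w t : R) (k : nat) : 0 < r -> (exp (t / (2 * r ^ 2) * (cN ^ 2 / 4 - cN * J))) * (2 * th2re (cN ^ 2 * (t / (2 * PI * r ^ 2))) (cN * w) (cN * J * (t / (2 * PI * r ^ 2))) k) =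
  1 * (exp (-((t / (2 * r ^ 2)) * Ak cN J k)) * cos ((2 * INR k + 1) * PI * (cN * w))) + 1 * (exp (-((t / (2 * r ^ 2)) * Bk cN J k)) * cos ((2 * INR k + 1) * PI * (cN * w))).
Proof. intros Hr. rewrite <- (core_A r cN J w t k Hr), <- (core_B r cN J w t k Hr). unfold th2re. field. Qed.
Lemma pw2im (r cN J w t : R) (k : nat) : 0 < r -> (exp (t / (2 * r ^ 2) * (cN ^ 2 / 4 - cN * J))) * (2 * th2im (cN ^ 2 * (t / (2 * PI * r ^ 2))) (cN * w) (cN * J * (t / (2 * PI * r ^ 2))) k) =
  1 * (exp (-((t / (2 * r ^ 2)) * Ak cN J k)) * sin ((2 * INR k + 1) * PI * (cN * w))) + (-1) * (exp (-((t / (2 * r ^ 2)) * Bk cN J k)) * sin ((2 * INR k + 1) * PI * (cN * w))).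
Proof. intros Hr. rewrite <- (core_A r cN J w t k Hr), <- (core_B r cN J w t k Hr). unfold th2im. field. Qed.
Lemma pw1re (r cN J w t : R) (k : nat) : 0 < r -> (exp (t / (2 * r ^ 2) * (cN ^ 2 / 4 - cN * J))) * (2 * th1re (cN ^ 2 * (t / (2 * PI * r ^ 2))) (cN * w) (cN * J * (t / (2 * PI * r ^ 2))) k) =
  1 * (exp (-((t / (2 * r ^ 2)) * Ak cN J k)) * ((-1) ^ k * sin ((2 * INR k + 1) * PI * (cN * w)))) + 1 * (exp (-((t / (2 * r ^ 2)) * Bk cN J k)) * ((-1) ^ k * sin ((2 * INR k + 1) * PI * (cN * w)))).
Proof. intros Hr. rewrite <- (core_A r cN J w t k Hr), <- (core_B r cN J w t k Hr). unfold th1re. field. Qed.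
Lemma pw1im (r cN J w t : R) (k : nat) : 0 < r -> (exp (t / (2 * r ^ 2) * (cN ^ 2 / 4 - cN * J))) * (2 * th1im (cN ^ 2 * (t / (2 * PI * r ^ 2))) (cN * w) (cN * J * (t / (2 * PI * r ^ 2))) k) =
  (-1) * (exp (-((t / (2 * r ^ 2)) * Ak cN J k)) * ((-1) ^ k * cos ((2 * INR k + 1) * PI * (cN * w)))) + 1 * (exp (-((t / (2 * r ^ 2)) * Bk cN J k)) * ((-1) ^ k * cos ((2 * INR k + 1) * PI * (cN * w)))).
Proof. intros Hr. rewrite <- (core_A r cN J w t k Hr), <- (core_B r cN J w t k Hr). unfold th1im. field. Qed.

Definition nE r cN J t := exp (t / (2 * r ^ 2) * (cN ^ 2 / 4 - cN * J)).
Definition th2n r cN J w t :=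
  Cmult (RtoC (nE r cN J t))
    (theta2 (cN * w, cN * J * (t / (2 * PI * r ^ 2))) (0, cN ^ 2 * (t / (2 * PI * r ^ 2)))).
Definition th1n r cN J w t :=
  Cmult (RtoC (nE r cN J t))
    (theta1 (cN * w, cN * J * (t / (2 * PI * r ^ 2))) (0, cN ^ 2 * (t / (2 * PI * r ^ 2)))).

Lemma th2n_eq r cN J w t : 0 < r -> th2n r cN J w t =
  (Series (fun k => 1 * (exp (-(t / (2 * r ^ 2) * Ak cN J k)) * cos ((2 * INR k + 1) * PI * (cN * w)))
                  + 1 * (exp (-(t / (2 * r ^ 2) * Bk cN J k)) * cos ((2 * INR k + 1) * PI * (cN * w)))),
   Series (fun k => 1 * (exp (-(t / (2 * r ^ 2) * Ak cN J k)) * sin ((2 * INR k + 1) * PI * (cN * w)))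
                  + (-1) * (exp (-(t / (2 * r ^ 2) * Bk cN J k)) * sin ((2 * INR k + 1) * PI * (cN * w))))).
Proof.
  intros Hr. unfold th2n. rewrite theta2_explicit, Cmult_RtoC_l.
  rewrite <- !(Series_scal_l 2), <- !(Series_scal_l (nE r cN J t)).
  apply injective_projections; simpl; apply Series_ext; intros k.
  apply pw2re; auto. apply pw2im; auto.
Qed.

Lemma th1n_eq r cN J w t : 0 < r -> th1n r cN J w t =
  (Series (fun k => 1 * (exp (-(t / (2 * r ^ 2) * Ak cN J k)) * ((-1) ^ k * sin ((2 * INR k + 1) * PI * (cN * w))))
                  + 1 * (exp (-(t / (2 * r ^ 2) * Bk cN J k)) * ((-1) ^ k * sin ((2 * INR k + 1) * PI * (cN * w))))),
   Series (fun k => (-1) * (exp (-(t / (2 * r ^ 2) * Ak cN J k)) * ((-1) ^ k * cos ((2 * INR k + 1) * PI * (cN * w))))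
                  + 1 * (exp (-(t / (2 * r ^ 2) * Bk cN J k)) * ((-1) ^ k * cos ((2 * INR k + 1) * PI * (cN * w)))))).
Proof.
  intros Hr. unfold th1n. rewrite theta1_explicit, Cmult_RtoC_l.
  rewrite <- !(Series_scal_l 2), <- !(Series_scal_l (nE r cN J t)).
  apply injective_projections; simpl; apply Series_ext; intros k.
  apply pw1re; auto. apply pw1im; auto.
Qed.

Lemma a0_eq cN w : (2 * INR 0 + 1) * PI * (cN * w) = PI * cN * w.
Proof. simpl. ring. Qed.

Lemma th2n_lim_pos r cN J w : 0 < r -> 0 < cN -> 0 < J -> J < cN ->
  climit (th2n r cN J w) (cos (PI * cN * w), - sin (PI * cN * w)).
Proof.
  intros. eapply climit_ext. intros t; symmetry; apply th2n_eq; auto.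
  apply climit_pair.
  - eapply rlimit_eq. apply lim_AB_pos; auto. intros; apply abs_cos.
    simpl. rewrite <- a0_eq. simpl. ring.
  - eapply rlimit_eq. apply lim_AB_pos; auto. intros; apply abs_sin.
    rewrite <- a0_eq. simpl. ring.
Qed.

Lemma th2n_lim_zero r cN J w : 0 < r -> 0 < cN -> J = 0 ->
  climit (th2n r cN J w) (2 * cos (PI * cN * w), 0).
Proof.
  intros. eapply climit_ext. intros t; symmetry; apply th2n_eq; auto.
  apply climit_pair.
  - eapply rlimit_eq. apply lim_AB_zero; auto. intros; apply abs_cos.
    rewrite <- a0_eq. simpl. ring.
  - eapply rlimit_eq. apply lim_AB_zero; auto. intros; apply abs_sin. ring.
Qed.

Lemma th1n_lim_pos r cN J w : 0 < r -> 0 < cN -> 0 < J -> J < cN ->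
  climit (th1n r cN J w) (sin (PI * cN * w), cos (PI * cN * w)).
Proof.
  intros. eapply climit_ext. intros t; symmetry; apply th1n_eq; auto.
  apply climit_pair.
  - eapply rlimit_eq. apply lim_AB_pos; auto. intros; apply abs_sgn_mul, abs_sin.
    rewrite <- a0_eq. simpl. ring.
  - eapply rlimit_eq. apply lim_AB_pos; auto. intros; apply abs_sgn_mul, abs_cos.
    rewrite <- a0_eq. simpl. ring.
Qed.

Lemma th1n_lim_zero r cN J w : 0 < r -> 0 < cN -> J = 0 ->
  climit (th1n r cN J w) (2 * sin (PI * cN * w), 0).
Proof.
  intros. eapply climit_ext. intros t; symmetry; apply th1n_eq; auto.
  apply climit_pair.
  - eapply rlimit_eq. apply lim_AB_zero; auto. intros; apply abs_sgn_mul, abs_sin.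
    rewrite <- a0_eq. simpl. ring.
  - eapply rlimit_eq. apply lim_AB_zero; auto. intros; apply abs_sgn_mul, abs_cos. ring.
Qed.

Lemma climit_opp f a : climit f a -> climit (fun t => Copp (f t)) (Copp a).
Proof.
  intros H. unfold Copp. apply climit_pair; apply rlimit_opp.
  apply climit_fst; auto. apply climit_snd; auto.
Qed.
Lemma climit_minus f g a b : climit f a -> climit g b ->
  climit (fun t => Cminus (f t) (g t)) (Cminus a b).
Proof. intros. unfold Cminus. apply climit_plus; auto. apply climit_opp; auto. Qed.
Lemma climit_cmul c f a : climit f a -> climit (fun t => Cmult c (f t)) (Cmult c a).
Proof. intros. apply climit_mult; auto. apply climit_const. Qed.

Lemma argp_eq cN J r t s :
  Cmult (RtoC cN) (Cplus (Cmult (RtoC J) (tau r t)) (RtoC s)) = (cN * s, cN * J * (t / (2 * PI * r ^ 2))).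
Proof. unfold tau. apply injective_projections; simpl; ring. Qed.
Lemma argm_eq cN J r t s :
  Cmult (RtoC cN) (Cminus (Cmult (RtoC J) (tau r t)) (RtoC s)) = (cN * (- s), cN * J * (t / (2 * PI * r ^ 2))).
Proof. unfold tau. apply injective_projections; simpl; ring. Qed.
Lemma taup_eq cN r t : Cmult (RtoC (cN ^ 2)) (tau r t) = (0, cN ^ 2 * (t / (2 * PI * r ^ 2))).
Proof. unfold tau. apply injective_projections; simpl; ring. Qed.
Lemma marg_eq cN J r t : Cmult (RtoC (cN * J)) (tau r t) = (cN * 0, cN * J * (t / (2 * PI * r ^ 2))).
Proof. unfold tau. apply injective_projections; simpl; ring. Qed.
Lemma zarg_eq cN J r t : J = 0 -> RtoC 0 = (cN * 0, cN * J * (t / (2 * PI * r ^ 2))).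
Proof. intros ->. apply injective_projections; simpl; ring. Qed.

Definition Mn RN N r j x t := Cmult (RtoC (nE r (calN RN N) (Jidx RN j) t)) (Mfun RN N r j x t).
Definition mn RN N r j s := Cmult (RtoC (nE r (calN RN N) (Jidx RN j) s)) (mconst RN N r j s).

Definition lim_l (RN : RootSys) N r j x : C :=
  let J := Jidx RN j in let cN := calN RN N in let s := xi r x in
  match RN with
  | A_N => Cmult (e2pii (J * s)) (cos (PI * cN * s), - sin (PI * cN * s))
  | B_N | Bv_N =>
      if Nat.eqb j 1 then
        Cminus (Cmult (e2pii (J * s)) (2 * sin (PI * cN * s), 0))
               (Cmult (e2pii (- (J * s))) (2 * sin (PI * cN * (- s)), 0))
      else
        Cminus (Cmult (e2pii (J * s)) (sin (PI * cN * s), cos (PI * cN * s)))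
               (Cmult (e2pii (- (J * s))) (sin (PI * cN * (- s)), cos (PI * cN * (- s))))
  | C_N | Cv_N | BC_N =>
        Cminus (Cmult (e2pii (J * s)) (cos (PI * cN * s), - sin (PI * cN * s)))
               (Cmult (e2pii (- (J * s))) (cos (PI * cN * (- s)), - sin (PI * cN * (- s))))
  | D_N =>
      if Nat.eqb j 1 then
        Cplus (Cmult (e2pii (J * s)) (2 * cos (PI * cN * s), 0))
              (Cmult (e2pii (- (J * s))) (2 * cos (PI * cN * (- s)), 0))
      else
        Cplus (Cmult (e2pii (J * s)) (cos (PI * cN * s), - sin (PI * cN * s)))
              (Cmult (e2pii (- (J * s))) (cos (PI * cN * (- s)), - sin (PI * cN * (- s))))
  end.

Definition lim_c (RN : RootSys) N r j : C :=
  let cN := calN RN N in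
  let generic := Cmult (RtoC (2 * PI * r)) (cos (PI * cN * 0), - sin (PI * cN * 0)) in
  let special1 := Cmult (RtoC (4 * PI * r)) (2 * cos (PI * cN * 0), 0) in
  match RN with
  | A_N | C_N | Cv_N | BC_N => generic
  | B_N | Bv_N => if Nat.eqb j 1 then special1 else generic
  | D_N => if Nat.eqb j 1 then special1
           else if Nat.eqb j N then Cmult (RtoC (4 * PI * r)) (cos (PI * cN * 0), - sin (PI * cN * 0))
           else generic
  end.

Definition good RN N := (1 <= N)%nat /\ (RN = D_N -> (2 <= N)%nat).

Lemma J_facts RN N j : good RN N -> (1 <= j <= N)%nat ->
  0 < calN RN N /\ 0 <= Jidx RN j /\ Jidx RN j < calN RN N /\
  (Jidx RN j = 0 \/ 0 < Jidx RN j) /\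
  ((RN = B_N \/ RN = Bv_N \/ RN = D_N) -> j <> 1%nat -> 0 < Jidx RN j) /\
  ((RN = B_N \/ RN = Bv_N \/ RN = D_N) -> j = 1%nat -> Jidx RN j = 0) /\
  ((RN <> B_N /\ RN <> Bv_N /\ RN <> D_N) -> 0 < Jidx RN j).
Proof.
  intros [HN HD] Hj.
  assert (Hj1 : 1 <= INR j) by (apply (le_INR 1); lia).
  assert (HjN : INR j <= INR N) by (apply le_INR; lia).
  destruct RN; simpl; (split; [|split; [|split; [|split; [|split; [|split]]]]]);
  try (intros; lra); try (intros [?|[?|?]]; discriminate); try (intros [? [? ?]]; congruence);
  try (intros _ ->; simpl; ring);
  try (intros _ Hne; assert (2 <= INR j) by (apply (le_INR 2); lia); lra);
  try (destruct (Nat.eq_dec j 1) as [->|Hne]; [left; simpl; ring| right;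
       assert (2 <= INR j) by (apply (le_INR 2); lia); lra]);
  try lra.
  all: try (specialize (HD eq_refl); assert (2 <= INR N) by (apply (le_INR 2); lia); lra).
Qed.

Definition Mn_form (RN : RootSys) N r j x t : C :=
  let J := Jidx RN j in let cN := calN RN N in let s := xi r x in
  match RN with
  | A_N => Cmult (e2pii (J * s)) (th2n r cN J s t)
  | B_N | Bv_N => Cminus (Cmult (e2pii (J * s)) (th1n r cN J s t))
                         (Cmult (e2pii (- (J * s))) (th1n r cN J (- s) t))
  | C_N | Cv_N | BC_N => Cminus (Cmult (e2pii (J * s)) (th2n r cN J s t))
                         (Cmult (e2pii (- (J * s))) (th2n r cN J (- s) t))
  | D_N => Cplus (Cmult (e2pii (J * s)) (th2n r cN J s t))
                         (Cmult (e2pii (- (J * s))) (th2n r cN J (- s) t))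
  end.

Lemma Mn_form_eq RN N r j x t : Mn RN N r j x t = Mn_form RN N r j x t.
Proof.
  destruct RN; unfold Mn, Mfun, Mn_form, th2n, th1n; cbv beta iota zeta;
  rewrite ?argp_eq, ?argm_eq, ?taup_eq; ring.
Qed.

Lemma Mn_lim RN N r j x : 0 < r -> good RN N -> (1 <= j <= N)%nat ->
  climit (Mn RN N r j x) (lim_l RN N r j x).
Proof.
  intros Hr Hg Hj.
  destruct (J_facts RN N j Hg Hj) as [HcN [HJ0 [HJc [Hz [Hp1 [Hz1 Hp2]]]]]].
  apply climit_ext with (f := Mn_form RN N r j x).
  intros t; symmetry; apply Mn_form_eq.
  destruct RN; unfold Mn_form, lim_l; cbv beta iota zeta.
  - apply climit_cmul, th2n_lim_pos; auto. apply Hp2; repeat split; discriminate.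
  - destruct (Nat.eqb j 1) eqn:E; [apply Nat.eqb_eq in E | apply Nat.eqb_neq in E];
    apply climit_minus; apply climit_cmul.
    1,2: apply th1n_lim_zero; auto.
    1,2: apply th1n_lim_pos; auto.
  - destruct (Nat.eqb j 1) eqn:E; [apply Nat.eqb_eq in E | apply Nat.eqb_neq in E];
    apply climit_minus; apply climit_cmul.
    1,2: apply th1n_lim_zero; auto.
    1,2: apply th1n_lim_pos; auto.
  - apply climit_minus; apply climit_cmul; apply th2n_lim_pos; auto;
    apply Hp2; repeat split; discriminate.
  - apply climit_minus; apply climit_cmul; apply th2n_lim_pos; auto;
    apply Hp2; repeat split; discriminate.
  - apply climit_minus; apply climit_cmul; apply th2n_lim_pos; auto;
    apply Hp2; repeat split; discriminate.
  - destruct (Nat.eqb j 1) eqn:E; [apply Nat.eqb_eq in E | apply Nat.eqb_neq in E];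
    apply climit_plus; apply climit_cmul.
    1,2: apply th2n_lim_zero; auto.
    1,2: apply th2n_lim_pos; auto.
Qed.

Definition mcoef (RN : RootSys) N j r : R :=
  match RN with
  | B_N | Bv_N => if Nat.eqb j 1 then 4 * PI * r else 2 * PI * r
  | D_N => if Nat.eqb j 1 then 4 * PI * r else if Nat.eqb j N then 4 * PI * r else 2 * PI * r
  | _ => 2 * PI * r
  end.

Lemma mn_form_eq RN N r j s : good RN N -> (1 <= j <= N)%nat ->
  mn RN N r j s = Cmult (RtoC (mcoef RN N j r)) (th2n r (calN RN N) (Jidx RN j) 0 s).
Proof.
  intros Hg Hj.
  destruct (J_facts RN N j Hg Hj) as [HcN [HJ0 [HJc [Hz [Hp1 [Hz1 Hp2]]]]]].
  destruct RN; unfold mn, mconst, mcoef, th2n; cbv beta iota zeta;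
  repeat match goal with |- context [Nat.eqb ?a ?b] =>
    let E := fresh "E" in destruct (Nat.eqb a b) eqn:E;
    [apply Nat.eqb_eq in E | apply Nat.eqb_neq in E] end;
  try (rewrite (zarg_eq (calN B_N N) (Jidx B_N j) r s) by (apply Hz1; [left; reflexivity | assumption]));
  try (rewrite (zarg_eq (calN Bv_N N) (Jidx Bv_N j) r s) by (apply Hz1; [right; left; reflexivity | assumption]));
  try (rewrite (zarg_eq (calN D_N N) (Jidx D_N j) r s) by (apply Hz1; [right; right; reflexivity | assumption]));
  rewrite ?marg_eq, ?taup_eq; try ring.
  all: try (subst j; rewrite marg_eq; ring).
  all: (subst; match goal with |- context [Jidx D_N ?n] => replace (Jidx D_N n) with (INR n - 1) by reflexivity end; ring).
Qed.

Lemma mn_lim RN N r j : 0 < r -> good RN N -> (1 <= j <= N)%nat ->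
  climit (mn RN N r j) (lim_c RN N r j).
Proof.
  intros Hr Hg Hj.
  destruct (J_facts RN N j Hg Hj) as [HcN [HJ0 [HJc [Hz [Hp1 [Hz1 Hp2]]]]]].
  apply climit_ext with (f := fun s => Cmult (RtoC (mcoef RN N j r)) (th2n r (calN RN N) (Jidx RN j) 0 s)).
  intros s; symmetry; apply mn_form_eq; auto.
  destruct RN; unfold lim_c, mcoef; cbv beta iota zeta;
  repeat match goal with |- context [Nat.eqb ?a ?b] =>
    let E := fresh "E" in destruct (Nat.eqb a b) eqn:E;
    [apply Nat.eqb_eq in E | apply Nat.eqb_neq in E] end;
  apply climit_cmul.
  all: first [ apply th2n_lim_zero; auto; apply Hz1; auto; tauto
             | apply th2n_lim_pos; auto; first [apply Hp2; repeat split; discriminate | apply Hp1; auto; tauto]].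
Qed.

Lemma lim_c_nz RN N r j : 0 < r -> lim_c RN N r j <> RtoC 0.
Proof.
  intros Hr H. apply (f_equal fst) in H. pose proof PI_RGT_0.
  destruct RN; unfold lim_c in H; cbv beta iota zeta in H;
  repeat match type of H with context [Nat.eqb ?a ?b] => destruct (Nat.eqb a b) end;
  simpl in H; rewrite ?Rmult_0_r, ?cos_0, ?sin_0 in H; nra.
Qed.

Lemma norm_id (m a b : C) (e : R) : 0 < e ->
  Cmult (Cinv m) (Cmult a (Cconj b)) =
  Cmult (Cinv (Cmult (RtoC (e * e)) m)) (Cmult (Cmult (RtoC e) a) (Cconj (Cmult (RtoC e) b))).
Proof.
  intros He. destruct m as [m1 m2], a as [a1 a2], b as [b1 b2].
  destruct (Req_dec (m1 ^ 2 + m2 ^ 2) 0) as [H0|H0].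
  - assert (m1 = 0) by nra. assert (m2 = 0) by nra. subst.
    assert (Hc : Cmult (RtoC (e * e)) (0, 0) = (0, 0)) by (apply injective_projections; simpl; ring).
    rewrite Hc.
    assert (Hi : Cinv (0, 0) = (0, 0)) by (unfold Cinv; apply injective_projections; simpl; unfold Rdiv; ring).
    rewrite Hi. apply injective_projections; simpl; ring.
  - assert (Hm : m1 * m1 + m2 * m2 <> 0) by (intro Hx; apply H0; rewrite <- Hx; ring).
    assert (He2 : e * e * (e * e) <> 0) by (apply Rmult_integral_contrapositive; split; nra).
    assert (Hm2 : e * e * m1 * (e * e * m1) + e * e * m2 * (e * e * m2) <> 0).
    { replace (e * e * m1 * (e * e * m1) + e * e * m2 * (e * e * m2)) with
        ((e * e * (e * e)) * (m1 * m1 + m2 * m2)) by ring.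
      apply Rmult_integral_contrapositive; split; auto. }
    unfold Cinv, Cmult, Cconj; simpl. apply injective_projections; simpl; field; split; auto.
Qed.

Lemma nE_sq r cN J ts : 0 < r -> nE r cN J ts = nE r cN J (ts / 2) * nE r cN J (ts / 2).
Proof.
  intros Hr. unfold nE. rewrite <- exp_plus. f_equal. field. lra.
Qed.

Lemma Kt_eq RN N r ts x y : 0 < r ->
  Kt RN N r ts (ts / 2) x y =
  Csum1 N (fun n => Cmult (Cinv (mn RN N r n ts))
                          (Cmult (Mn RN N r n x (ts / 2)) (Cconj (Mn RN N r n y (ts / 2))))).
Proof.
  intros Hr. unfold Kt, Csum1. f_equal. apply map_ext. intros n.
  unfold mn, Mn. rewrite (nE_sq r _ _ ts Hr).
  replace (ts - ts / 2) with (ts / 2) by field.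
  apply norm_id. apply exp_pos.
Qed.

Lemma sum_lim (F : nat -> R -> C) (L : nat -> C) (l : list nat) :
  (forall n, In n l -> climit (F n) (L n)) ->
  climit (fun t => fold_right Cplus (RtoC 0) (map (fun n => F n t) l))
         (fold_right Cplus (RtoC 0) (map L l)).
Proof.
  induction l as [|a l IH]; intros H; simpl.
  - apply climit_const.
  - apply climit_plus. apply H; simpl; auto. apply IH. intros; apply H; simpl; auto.
Qed.

Definition Llim RN N r x y n :=
  Cmult (Cinv (lim_c RN N r n)) (Cmult (lim_l RN N r n x) (Cconj (lim_l RN N r n y))).

Lemma Kt_lim RN N r x y : 0 < r -> good RN N ->
  climit (fun ts => Kt RN N r ts (ts / 2) x y) (Csum1 N (Llim RN N r x y)).
Proof.
  intros Hr Hg.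
  apply climit_ext with (f := fun ts => Csum1 N (fun n => Cmult (Cinv (mn RN N r n ts))
                          (Cmult (Mn RN N r n x (ts / 2)) (Cconj (Mn RN N r n y (ts / 2)))))).
  intros; symmetry; apply Kt_eq; auto.
  unfold Csum1. apply sum_lim. intros n Hn. apply in_seq in Hn.
  assert (Hj : (1 <= n <= N)%nat) by lia.
  unfold Llim. apply climit_mult.
  apply climit_inv. apply mn_lim; auto. apply lim_c_nz; auto.
  apply climit_mult. apply (climit_half (Mn RN N r n x)). apply Mn_lim; auto.
  apply climit_conj. apply (climit_half (Mn RN N r n y)). apply Mn_lim; auto.
Qed.

Definition rsum (f : nat -> R) (M : nat) : R := fold_right Rplus 0 (map f (seq 1 M)).

Lemma fold_Rplus_acc (l : list R) a : fold_right Rplus a l = fold_right Rplus 0 l + a.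
Proof. induction l; simpl. ring. rewrite IHl. ring. Qed.

Lemma rsum_S f M : rsum f (S M) = rsum f M + f (S M).
Proof.
  unfold rsum. rewrite seq_S, map_app, fold_right_app. simpl.
  rewrite fold_Rplus_acc. replace (1 + M)%nat with (S M) by lia. ring.
Qed.

Lemma rsum_0 f : rsum f 0 = 0.
Proof. reflexivity. Qed.

Lemma rsum_ext f g M : (forall j, (1 <= j <= M)%nat -> f j = g j) -> rsum f M = rsum g M.
Proof.
  induction M; intros H. reflexivity.
  rewrite !rsum_S, IHM, H. reflexivity. lia. intros; apply H; lia.
Qed.

Lemma rsum_const c M : rsum (fun _ => c) M = INR M * c.
Proof. induction M. unfold rsum; simpl; ring. rewrite rsum_S, IHM, S_INR. ring. Qed.

Lemma tele f G s M : (forall j, (1 <= j <= M)%nat -> f j * s = G j - G (j - 1)%nat) ->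
  rsum f M * s = G M - G 0%nat.
Proof.
  induction M; intros H. unfold rsum; simpl; ring.
  rewrite rsum_S, Rmult_plus_distr_r, IHM.
  rewrite H by lia. replace (S M - 1)%nat with M by lia. ring. intros; apply H; lia.
Qed.

Lemma INR_pred j : (1 <= j)%nat -> INR (j - 1) = INR j - 1.
Proof. intros. rewrite minus_INR by lia. simpl. ring. Qed.

Lemma tele_cos k th : 2 * cos (k * th) * sin th = sin ((k + 1) * th) - sin ((k - 1) * th).
Proof.
  replace ((k + 1) * th) with (k * th + th) by ring.
  replace ((k - 1) * th) with (k * th - th) by ring.
  rewrite sin_plus, sin_minus. ring.
Qed.
Lemma tele_sin k th : 2 * sin (k * th) * sin th = cos ((k - 1) * th) - cos ((k + 1) * th).
Proof.
  replace ((k + 1) * th) with (k * th + th) by ring.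
  replace ((k - 1) * th) with (k * th - th) by ring.
  rewrite cos_plus, cos_minus. ring.
Qed.

Lemma sin0_nat th n : sin th = 0 -> cos (INR n * th) = cos th ^ n /\ sin (INR n * th) = 0.
Proof.
  intros H. induction n. simpl. rewrite Rmult_0_l, cos_0, sin_0. auto.
  destruct IHn as [IH1 IH2]. rewrite S_INR.
  replace ((INR n + 1) * th) with (INR n * th + th) by ring.
  rewrite cos_plus, sin_plus, IH1, IH2, H. simpl. split; ring.
Qed.

Lemma sin0_diff th a b : sin th = 0 ->
  cos ((INR a - INR b) * th) = cos th ^ (a + b) /\ sin ((INR a - INR b) * th) = 0.
Proof.
  intros H. destruct (sin0_nat th a H) as [A1 A2]. destruct (sin0_nat th b H) as [B1 B2].
  replace ((INR a - INR b) * th) with (INR a * th - INR b * th) by ring.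
  rewrite cos_minus, sin_minus, A1, A2, B1, B2, pow_add. split; ring.
Qed.

Lemma cos2_one th : sin th = 0 -> cos th ^ 2 = 1.
Proof. intros H. pose proof (sin2_cos2 th). unfold Rsqr in *. rewrite H in *. simpl. lra. Qed.

Lemma pow_even c k : c ^ 2 = 1 -> c ^ (2 * k) = 1.
Proof. intros H. rewrite pow_mult, H. apply pow1. Qed.
Lemma pow_odd c k : c ^ 2 = 1 -> c ^ (2 * k + 1) = c.
Proof. intros H. rewrite pow_add, pow_even by auto. simpl. ring. Qed.

Lemma sinratio_eq m th : sin th <> 0 -> sinratio m th = sin (m * th) / sin th.
Proof. intros H. unfold sinratio. destruct (Req_EM_T (sin th) 0); [contradiction|reflexivity]. Qed.
Lemma sinratio_eq0 m th : sin th = 0 -> sinratio m th = m * cos (m * th) / cos th.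
Proof. intros H. unfold sinratio. destruct (Req_EM_T (sin th) 0); [reflexivity|contradiction]. Qed.

Lemma inv_c c : c ^ 2 = 1 -> / c = c.
Proof.
  intros H. assert (c <> 0) by (intro E; subst; simpl in H; lra).
  apply Rmult_eq_reg_l with c; auto. rewrite Rinv_r by auto. simpl in H; lra.
Qed.

Ltac inr_conv := rewrite ?mult_INR, ?plus_INR, ?mult_INR; simpl; ring.

Lemma pow_even_add c k m : c ^ 2 = 1 -> c ^ (2 * k + m) = c ^ m.
Proof. intros H. rewrite pow_add, pow_even by auto. ring. Qed.

Lemma R_B N th : rsum (fun j => 2 * cos ((2 * INR j - 2 * INR N - 1) * th)) N = sinratio (2 * INR N) th.
Proof.
  destruct (Req_dec (sin th) 0) as [H0|H0].
  - rewrite sinratio_eq0 by auto. pose proof (cos2_one th H0) as Hc.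
    assert (Hcn : cos th <> 0) by (intro E; rewrite E in Hc; simpl in Hc; lra).
    rewrite (rsum_ext _ (fun _ => 2 * cos th)).
    rewrite rsum_const.
    replace (2 * INR N * th) with ((INR (2 * N) - INR 0) * th) by inr_conv.
    rewrite (proj1 (sin0_diff th _ _ H0)). replace (2 * N + 0)%nat with (2 * N)%nat by lia.
    rewrite pow_even by auto. unfold Rdiv. rewrite inv_c by auto. ring.
    intros j Hj. replace (2 * INR j - 2 * INR N - 1) with (INR (2 * j) - INR (2 * N + 1)) by inr_conv.
    rewrite (proj1 (sin0_diff th _ _ H0)). replace (2 * j + (2 * N + 1))%nat with (2 * (j + N) + 1)%nat by lia.
    rewrite pow_odd; auto.
  - rewrite sinratio_eq by auto. apply (Rmult_eq_reg_r (sin th)); auto.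
    unfold Rdiv. rewrite Rmult_assoc, Rinv_l, Rmult_1_r by auto.
    rewrite (tele _ (fun j => sin ((2 * INR j - 2 * INR N) * th))).
    simpl. replace ((2 * INR N - 2 * INR N) * th) with 0 by ring.
    replace ((2 * 0 - 2 * INR N) * th) with (- (2 * INR N * th)) by ring.
    rewrite sin_0, sin_neg. ring.
    intros j Hj. rewrite tele_cos. rewrite INR_pred by lia. f_equal; f_equal; f_equal; ring.
Qed.

Lemma R_C N th : rsum (fun j => 2 * cos ((2 * INR j - 2 * INR N - 2) * th)) N = sinratio (2 * INR N + 1) th - 1.
Proof.
  destruct (Req_dec (sin th) 0) as [H0|H0].
  - rewrite sinratio_eq0 by auto. pose proof (cos2_one th H0) as Hc.
    assert (Hcn : cos th <> 0) by (intro E; rewrite E in Hc; simpl in Hc; lra).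
    rewrite (rsum_ext _ (fun _ => 2)).
    rewrite rsum_const.
    replace ((2 * INR N + 1) * th) with ((INR (2 * N + 1) - INR 0) * th) by inr_conv.
    rewrite (proj1 (sin0_diff th _ _ H0)). replace (2 * N + 1 + 0)%nat with (2 * N + 1)%nat by lia.
    rewrite pow_odd by auto. field. auto.
    intros j Hj. replace (2 * INR j - 2 * INR N - 2) with (INR (2 * j) - INR (2 * N + 2)) by inr_conv.
    rewrite (proj1 (sin0_diff th _ _ H0)). replace (2 * j + (2 * N + 2))%nat with (2 * (j + N + 1))%nat by lia.
    rewrite pow_even; auto. ring.
  - rewrite sinratio_eq by auto. apply (Rmult_eq_reg_r (sin th)); auto.
    unfold Rdiv. rewrite Rmult_minus_distr_r, Rmult_assoc, Rinv_l, Rmult_1_r by auto.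
    rewrite (tele _ (fun j => sin ((2 * INR j - 2 * INR N - 1) * th))).
    simpl. replace ((2 * INR N - 2 * INR N - 1) * th) with (- th) by ring.
    replace ((2 * 0 - 2 * INR N - 1) * th) with (- ((2 * INR N + 1) * th)) by ring.
    rewrite !sin_neg. ring.
    intros j Hj. rewrite tele_cos. rewrite INR_pred by lia. f_equal; f_equal; f_equal; ring.
Qed.

Lemma R_D N th : (1 <= N)%nat ->
  rsum (fun j => if Nat.eqb j N then 1 else 2 * cos ((2 * INR j - 2 * INR N) * th)) N
  = sinratio (2 * INR N - 1) th.
Proof.
  intros HN. destruct N as [|M]. lia.
  rewrite rsum_S, Nat.eqb_refl.
  rewrite (rsum_ext _ (fun j => 2 * cos ((2 * INR j - 2 * INR (S M)) * th))).
  2: { intros j Hj. destruct (Nat.eqb j (S M)) eqn:E. apply Nat.eqb_eq in E; lia. reflexivity. }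
  destruct (Req_dec (sin th) 0) as [H0|H0].
  - rewrite sinratio_eq0 by auto. pose proof (cos2_one th H0) as Hc.
    assert (Hcn : cos th <> 0) by (intro E; rewrite E in Hc; simpl in Hc; lra).
    rewrite (rsum_ext _ (fun _ => 2)).
    rewrite rsum_const.
    replace ((2 * INR (S M) - 1) * th) with ((INR (2 * S M) - INR 1) * th) by inr_conv.
    rewrite (proj1 (sin0_diff th _ _ H0)). replace (2 * S M + 1)%nat with (2 * S M + 1)%nat by lia.
    rewrite pow_odd by auto. rewrite S_INR. field. auto.
    intros j Hj. replace (2 * INR j - 2 * INR (S M)) with (INR (2 * j) - INR (2 * S M)) by inr_conv.
    rewrite (proj1 (sin0_diff th _ _ H0)). replace (2 * j + (2 * S M))%nat with (2 * (j + S M))%nat by lia.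
    rewrite pow_even; auto. ring.
  - rewrite sinratio_eq by auto. apply (Rmult_eq_reg_r (sin th)); auto.
    unfold Rdiv. rewrite Rmult_plus_distr_r, Rmult_assoc, Rinv_l, Rmult_1_r by auto.
    rewrite (tele _ (fun j => sin ((2 * INR j - 2 * INR (S M) + 1) * th))).
    rewrite S_INR. simpl. replace ((2 * INR M - 2 * (INR M + 1) + 1) * th) with (- th) by ring.
    replace ((2 * 0 - 2 * (INR M + 1) + 1) * th) with (- ((2 * (INR M + 1) - 1) * th)) by ring.
    rewrite !sin_neg. ring.
    intros j Hj. rewrite tele_cos. rewrite INR_pred by lia. f_equal; f_equal; f_equal; ring.
Qed.

Lemma R_Are N th : rsum (fun j => cos ((2 * INR j - INR N - 1) * th)) N = sinratio (INR N) th.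
Proof.
  destruct (Req_dec (sin th) 0) as [H0|H0].
  - rewrite sinratio_eq0 by auto. pose proof (cos2_one th H0) as Hc.
    assert (Hcn : cos th <> 0) by (intro E; rewrite E in Hc; simpl in Hc; lra).
    rewrite (rsum_ext _ (fun _ => cos th ^ (N + 1))).
    rewrite rsum_const.
    replace (INR N * th) with ((INR N - INR 0) * th) by (simpl; ring).
    rewrite (proj1 (sin0_diff th _ _ H0)). rewrite Nat.add_0_r, pow_add.
    replace (cos th ^ 1) with (cos th) by ring. unfold Rdiv. rewrite inv_c by auto. ring.
    intros j Hj. replace (2 * INR j - INR N - 1) with (INR (2 * j) - INR (N + 1)) by inr_conv.
    rewrite (proj1 (sin0_diff th _ _ H0)). apply pow_even_add; auto.
  - rewrite sinratio_eq by auto. apply (Rmult_eq_reg_r (2 * sin th)). 2: lra.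
    unfold Rdiv.
    rewrite (tele _ (fun j => sin ((2 * INR j - INR N) * th))).
    simpl. replace ((2 * INR N - INR N) * th) with (INR N * th) by ring.
    replace ((2 * 0 - INR N) * th) with (- (INR N * th)) by ring.
    rewrite sin_neg. field. auto.
    intros j Hj. rewrite <- Rmult_assoc, (Rmult_comm _ 2), tele_cos. rewrite INR_pred by lia.
    f_equal; f_equal; f_equal; ring.
Qed.

Lemma R_Aim N th : rsum (fun j => sin ((2 * INR j - INR N - 1) * th)) N = 0.
Proof.
  destruct (Req_dec (sin th) 0) as [H0|H0].
  - rewrite (rsum_ext _ (fun _ => 0)). rewrite rsum_const. ring.
    intros j Hj. replace (2 * INR j - INR N - 1) with (INR (2 * j) - INR (N + 1)) by inr_conv.
    apply (proj2 (sin0_diff th _ _ H0)).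
  - apply (Rmult_eq_reg_r (2 * sin th)). 2: lra.
    rewrite (tele _ (fun j => - cos ((2 * INR j - INR N) * th))).
    simpl. replace ((2 * INR N - INR N) * th) with (INR N * th) by ring.
    replace ((2 * 0 - INR N) * th) with (- (INR N * th)) by ring.
    rewrite cos_neg. ring.
    intros j Hj. rewrite <- Rmult_assoc, (Rmult_comm _ 2), tele_sin. rewrite INR_pred by lia.
    replace ((2 * (INR j - 1) - INR N) * th) with (((2 * INR j - INR N - 1) - 1) * th) by ring.
    replace ((2 * INR j - INR N) * th) with (((2 * INR j - INR N - 1) + 1) * th) by ring.
    ring.
Qed.

Lemma e2pii_eq a : e2pii a = (cos (2 * PI * a), sin (2 * PI * a)).
Proof. unfold e2pii, Cexp. simpl. rewrite exp_0. apply injective_projections; simpl; ring. Qed.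

Lemma cneg1 u : cos (2 * PI * (- u)) = cos (2 * PI * u).
Proof. replace (2 * PI * (- u)) with (- (2 * PI * u)) by ring. apply cos_neg. Qed.
Lemma sneg1 u : sin (2 * PI * (- u)) = - sin (2 * PI * u).
Proof. replace (2 * PI * (- u)) with (- (2 * PI * u)) by ring. apply sin_neg. Qed.
Lemma cneg2 c u : cos (PI * c * (- u)) = cos (PI * c * u).
Proof. replace (PI * c * (- u)) with (- (PI * c * u)) by ring. apply cos_neg. Qed.
Lemma sneg2 c u : sin (PI * c * (- u)) = - sin (PI * c * u).
Proof. replace (PI * c * (- u)) with (- (PI * c * u)) by ring. apply sin_neg. Qed.
Lemma czero c : cos (PI * c * 0) = 1.
Proof. rewrite Rmult_0_r. apply cos_0. Qed.
Lemma szero c : sin (PI * c * 0) = 0.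
Proof. rewrite Rmult_0_r. apply sin_0. Qed.

Ltac trig_norm :=
  rewrite ?e2pii_eq; rewrite ?cneg1, ?sneg1, ?cneg2, ?sneg2, ?czero, ?szero;
  rewrite ?sin_minus, ?cos_minus.

Lemma Llim_C RN N r x y j : 0 < r -> (RN = C_N \/ RN = Cv_N \/ RN = BC_N) ->
  Llim RN N r x y j = RtoC (/ (2 * PI * r) *
    (4 * sin (2 * PI * (Jidx RN j * xi r x) - PI * calN RN N * xi r x)
       * sin (2 * PI * (Jidx RN j * xi r y) - PI * calN RN N * xi r y))).
Proof.
  intros Hr HRN. pose proof PI_RGT_0.
  unfold Llim.
  destruct HRN as [ -> | [ -> | -> ] ]; unfold lim_l, lim_c; cbv beta iota zeta; trig_norm;
  unfold Cinv, Cmult, Cminus, Cplus, Copp, Cconj, RtoC; simpl;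
  apply injective_projections; simpl; field; nra.
Qed.

Lemma Llim_B RN N r x y j : 0 < r -> (RN = B_N \/ RN = Bv_N) -> (1 <= j)%nat ->
  Llim RN N r x y j = RtoC (/ (2 * PI * r) *
    (4 * sin (2 * PI * (Jidx RN j * xi r x) - PI * calN RN N * xi r x)
       * sin (2 * PI * (Jidx RN j * xi r y) - PI * calN RN N * xi r y))).
Proof.
  intros Hr HRN Hj. pose proof PI_RGT_0.
  unfold Llim.
  destruct HRN as [ -> | -> ]; unfold lim_l, lim_c; cbv beta iota zeta;
  (destruct (Nat.eqb j 1) eqn:E; [apply Nat.eqb_eq in E; subst j;
     replace (Jidx _ 1) with 0 by (simpl; ring); rewrite ?Rmult_0_l, ?Rmult_0_r | ]);
  trig_norm; rewrite ?Rmult_0_r, ?cos_0, ?sin_0;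
  unfold Cinv, Cmult, Cminus, Cplus, Copp, Cconj, RtoC; simpl;
  apply injective_projections; simpl; field; nra.
Qed.

Lemma Llim_D N r x y j : 0 < r -> (2 <= N)%nat -> (1 <= j)%nat ->
  Llim D_N N r x y j = RtoC ((if Nat.eqb j N then / (4 * PI * r) else / (2 * PI * r)) *
    (4 * cos (2 * PI * (Jidx D_N j * xi r x) - PI * calN D_N N * xi r x)
       * cos (2 * PI * (Jidx D_N j * xi r y) - PI * calN D_N N * xi r y))).
Proof.
  intros Hr HN Hj. pose proof PI_RGT_0.
  unfold Llim, lim_l, lim_c; cbv beta iota zeta.
  destruct (Nat.eqb j 1) eqn:E; [apply Nat.eqb_eq in E; subst j;
     replace (Nat.eqb 1 N) with false by (symmetry; apply Nat.eqb_neq; lia);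
     replace (Jidx _ 1) with 0 by (simpl; ring); rewrite ?Rmult_0_l, ?Rmult_0_r | ];
  [| destruct (Nat.eqb j N)];
  trig_norm; rewrite ?Rmult_0_r, ?cos_0, ?sin_0;
  unfold Cinv, Cmult, Cminus, Cplus, Copp, Cconj, RtoC; simpl;
  apply injective_projections; simpl; field; nra.
Qed.

Lemma Llim_A N r x y j : 0 < r ->
  Llim A_N N r x y j =
   (/ (2 * PI * r) *
    (cos (2 * PI * (Jidx A_N j * xi r x) - PI * calN A_N N * xi r x)
       * cos (2 * PI * (Jidx A_N j * xi r y) - PI * calN A_N N * xi r y)
     + sin (2 * PI * (Jidx A_N j * xi r x) - PI * calN A_N N * xi r x)
       * sin (2 * PI * (Jidx A_N j * xi r y) - PI * calN A_N N * xi r y)),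
    / (2 * PI * r) *
    (sin (2 * PI * (Jidx A_N j * xi r x) - PI * calN A_N N * xi r x)
       * cos (2 * PI * (Jidx A_N j * xi r y) - PI * calN A_N N * xi r y)
     - cos (2 * PI * (Jidx A_N j * xi r x) - PI * calN A_N N * xi r x)
       * sin (2 * PI * (Jidx A_N j * xi r y) - PI * calN A_N N * xi r y))).
Proof.
  intros Hr. pose proof PI_RGT_0.
  unfold Llim, lim_l, lim_c; cbv beta iota zeta.
  trig_norm; rewrite ?Rmult_0_r, ?cos_0, ?sin_0;
  unfold Cinv, Cmult, Cminus, Cplus, Copp, Cconj, RtoC; simpl;
  apply injective_projections; simpl; field; nra.
Qed.

Lemma Csum1_S f M : Csum1 (S M) f = Cplus (Csum1 M f) (f (S M)).
Proof.
  unfold Csum1. rewrite seq_S, map_app, fold_right_app. simpl.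
  replace (1 + M)%nat with (S M) by lia.
  generalize (map f (seq 1 M)). intros l. induction l; simpl.
  - ring.
  - rewrite IHl. ring.
Qed.

Lemma Csum1_pair N f g h : (forall j, (1 <= j <= N)%nat -> f j = (g j, h j)) ->
  Csum1 N f = (rsum g N, rsum h N).
Proof.
  induction N; intros H. reflexivity.
  rewrite Csum1_S, !rsum_S, IHN. rewrite H by lia. reflexivity. intros; apply H; lia.
Qed.

Lemma Csum1_RtoC N f g : (forall j, (1 <= j <= N)%nat -> f j = RtoC (g j)) ->
  Csum1 N f = RtoC (rsum g N).
Proof.
  intros H. rewrite (Csum1_pair N f g (fun _ => 0)). unfold RtoC. f_equal.
  rewrite rsum_const. ring. auto.
Qed.

Lemma rsum_scal c f M : rsum (fun j => c * f j) M = c * rsum f M.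
Proof. induction M. unfold rsum; simpl; ring. rewrite !rsum_S, IHM. ring. Qed.
Lemma rsum_minus f g M : rsum (fun j => f j - g j) M = rsum f M - rsum g M.
Proof. induction M. unfold rsum; simpl; ring. rewrite !rsum_S, IHM. ring. Qed.
Lemma rsum_plus f g M : rsum (fun j => f j + g j) M = rsum f M + rsum g M.
Proof. induction M. unfold rsum; simpl; ring. rewrite !rsum_S, IHM. ring. Qed.

Lemma prod_sin a b : 4 * sin a * sin b = 2 * cos (a - b) - 2 * cos (a + b).
Proof. rewrite cos_minus, cos_plus. ring. Qed.
Lemma prod_cos a b : 4 * cos a * cos b = 2 * cos (a - b) + 2 * cos (a + b).
Proof. rewrite cos_minus, cos_plus. ring. Qed.

Lemma ang_m r J cN x y : 0 < r ->
  (2 * PI * (J * xi r x) - PI * cN * xi r x) - (2 * PI * (J * xi r y) - PI * cN * xi r y)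
  = (2 * J - cN) * ((x - y) / (2 * r)).
Proof. intros. unfold xi. pose proof PI_RGT_0. field. lra. Qed.
Lemma ang_p r J cN x y : 0 < r ->
  (2 * PI * (J * xi r x) - PI * cN * xi r x) + (2 * PI * (J * xi r y) - PI * cN * xi r y)
  = (2 * J - cN) * ((x + y) / (2 * r)).
Proof. intros. unfold xi. pose proof PI_RGT_0. field. lra. Qed.

Lemma sum_sin RN N r x y : 0 < r ->
  rsum (fun j => / (2 * PI * r) *
    (4 * sin (2 * PI * (Jidx RN j * xi r x) - PI * calN RN N * xi r x)
       * sin (2 * PI * (Jidx RN j * xi r y) - PI * calN RN N * xi r y))) N
  = / (2 * PI * r) * (rsum (fun j => 2 * cos ((2 * Jidx RN j - calN RN N) * ((x - y) / (2 * r)))) N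
                     - rsum (fun j => 2 * cos ((2 * Jidx RN j - calN RN N) * ((x + y) / (2 * r)))) N).
Proof.
  intros Hr. rewrite <- rsum_minus, <- rsum_scal. apply rsum_ext. intros j _.
  rewrite prod_sin, ang_m, ang_p by auto. reflexivity.
Qed.

Lemma final_B RN N r x y : 0 < r -> (RN = B_N \/ RN = Cv_N \/ RN = BC_N) ->
  Csum1 N (Llim RN N r x y) = RtoC (Klimit RN N r x y).
Proof.
  intros Hr HRN.
  rewrite (Csum1_RtoC N _ (fun j => / (2 * PI * r) *
    (4 * sin (2 * PI * (Jidx RN j * xi r x) - PI * calN RN N * xi r x)
       * sin (2 * PI * (Jidx RN j * xi r y) - PI * calN RN N * xi r y)))).
  2: { intros j Hj. destruct HRN as [ -> | [ -> | -> ] ].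
       apply Llim_B; auto; lia. apply Llim_C; auto. apply Llim_C; auto. }
  f_equal. rewrite sum_sin by auto.
  assert (Hk : forall j, 2 * Jidx RN j - calN RN N = 2 * INR j - 2 * INR N - 1).
  { intros j. destruct HRN as [ -> | [ -> | -> ] ]; simpl; field. }
  rewrite !(rsum_ext (fun j => 2 * cos ((2 * Jidx RN j - calN RN N) * _)) (fun j => 2 * cos ((2 * INR j - 2 * INR N - 1) * _)))
    by (intros; rewrite Hk; reflexivity).
  rewrite !R_B. destruct HRN as [ -> | [ -> | -> ] ]; reflexivity.
Qed.

Lemma final_C RN N r x y : 0 < r -> (RN = C_N \/ RN = Bv_N) ->
  Csum1 N (Llim RN N r x y) = RtoC (Klimit RN N r x y).
Proof.
  intros Hr HRN.
  rewrite (Csum1_RtoC N _ (fun j => / (2 * PI * r) *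
    (4 * sin (2 * PI * (Jidx RN j * xi r x) - PI * calN RN N * xi r x)
       * sin (2 * PI * (Jidx RN j * xi r y) - PI * calN RN N * xi r y)))).
  2: { intros j Hj. destruct HRN as [ -> | -> ].
       apply Llim_C; auto. apply Llim_B; auto; lia. }
  f_equal. rewrite sum_sin by auto.
  assert (Hk : forall j, 2 * Jidx RN j - calN RN N = 2 * INR j - 2 * INR N - 2).
  { intros j. destruct HRN as [ -> | -> ]; simpl; ring. }
  rewrite !(rsum_ext (fun j => 2 * cos ((2 * Jidx RN j - calN RN N) * _)) (fun j => 2 * cos ((2 * INR j - 2 * INR N - 2) * _)))
    by (intros; rewrite Hk; reflexivity).
  rewrite !R_C. destruct HRN as [ -> | -> ]; unfold Klimit, KC; ring.
Qed.

Lemma final_D N r x y : 0 < r -> (2 <= N)%nat ->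
  Csum1 N (Llim D_N N r x y) = RtoC (Klimit D_N N r x y).
Proof.
  intros Hr HN. pose proof PI_RGT_0.
  set (h := fun th j => if Nat.eqb j N then 1 else 2 * cos ((2 * INR j - 2 * INR N) * th)).
  rewrite (Csum1_RtoC N _ (fun j => / (2 * PI * r) * (h ((x - y) / (2 * r)) j + h ((x + y) / (2 * r)) j))).
  2: { intros j Hj. rewrite Llim_D by (auto; lia). f_equal. unfold h.
       destruct (Nat.eqb j N) eqn:E.
       - apply Nat.eqb_eq in E. subst j.
         replace (2 * PI * (Jidx D_N N * xi r x) - PI * calN D_N N * xi r x) with 0 by (simpl; ring).
         replace (2 * PI * (Jidx D_N N * xi r y) - PI * calN D_N N * xi r y) with 0 by (simpl; ring).
         rewrite cos_0. field. lra.
       - rewrite prod_cos, ang_m, ang_p by auto.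
         replace (2 * Jidx D_N j - calN D_N N) with (2 * INR j - 2 * INR N) by (simpl; ring).
         ring. }
  f_equal. rewrite rsum_scal, rsum_plus. unfold h. rewrite !R_D by lia.
  reflexivity.
Qed.

Lemma final_A N r x y : 0 < r ->
  Csum1 N (Llim A_N N r x y) = RtoC (Klimit A_N N r x y).
Proof.
  intros Hr. pose proof PI_RGT_0.
  rewrite (Csum1_pair N _ (fun j => / (2 * PI * r) * cos ((2 * INR j - INR N - 1) * ((x - y) / (2 * r))))
                         (fun j => / (2 * PI * r) * sin ((2 * INR j - INR N - 1) * ((x - y) / (2 * r))))).
  2: { intros j Hj. rewrite Llim_A by auto.
       replace ((2 * INR j - INR N - 1) * ((x - y) / (2 * r))) with
         ((2 * PI * (Jidx A_N j * xi r x) - PI * calN A_N N * xi r x) -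
          (2 * PI * (Jidx A_N j * xi r y) - PI * calN A_N N * xi r y)).
       set (ax := 2 * PI * (Jidx A_N j * xi r x) - PI * calN A_N N * xi r x).
       set (ay := 2 * PI * (Jidx A_N j * xi r y) - PI * calN A_N N * xi r y).
       rewrite (cos_minus ax ay), (sin_minus ax ay). reflexivity.
       rewrite ang_m by auto. simpl. f_equal. field. }
  rewrite !rsum_scal, R_Are, R_Aim. unfold RtoC, Klimit, KA. f_equal. ring.
Qed.

Lemma final_all RN N r x y : 0 < r -> good RN N ->
  Csum1 N (Llim RN N r x y) = RtoC (Klimit RN N r x y).
Proof.
  intros Hr [HN HD]. destruct RN.
  apply final_A; auto.
  apply final_B; auto.
  apply final_C; auto.
  apply final_C; auto.
  apply final_B; auto.
  apply final_B; auto.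
  apply final_D; auto.
Qed.

Theorem corollary3p4 (RN : RootSys) (N : nat) (r : R) :
  0 < r -> (1 <= N)%nat -> (RN = D_N -> (2 <= N)%nat) ->
  forall x y : R, in_dom RN r x -> in_dom RN r y ->
  filterlim (fun ts : R => Kt RN N r ts (ts / 2) x y)
            (Rbar_locally p_infty)
            (locally (RtoC (Klimit RN N r x y))).
Proof.
  intros Hr HN HD x y _ _.
  assert (Hg : good RN N) by (split; auto).
  apply (climit_eq _ _ _ (Kt_lim RN N r x y Hr Hg)).
  apply final_all; auto.
Qed.
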